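(* Let $\mathcal{H}$ be a separable Hilbert space with a fixed orthonormal basis $\mathcal{B}=\{e_k\}_{k\in\mathbb{N}}$ and let $\mathcal{S}$ be a closed subspace of $\mathcal{H}$. The following are equivalent: (1) $\sup_{Q\in\mathcal{P}(\mathcal{D})}c[\mathcal{S},R(Q)]<1$ (i.e. $\mathcal{S}$ is $\mathcal{B}$-compatible); (2) $\sup_{Q\in\mathcal{P}_0(\mathcal{D})}c[\mathcal{S},R(Q)]<1$; (3) $\sup_{Q\in\mathcal{P}_{0,\mathcal{S}}(\mathcal{D})}c[\mathcal{S},R(Q)]<1$.
   Context: $\mathcal{D}$ is the algebra of bounded operators diagonal with respect to $\mathcal{B}$; $\mathcal{P}(\mathcal{D})$ is the set of orthogonal projections in $\mathcal{D}$; $\mathcal{P}_0(\mathcal{D})$ is the set of finite-rank elements of $\mathcal{P}(\mathcal{D})$; $\mathcal{P}_{0,\mathcal{S}}(\mathcal{D})=\{Q\in\mathcal{P}_0(\mathcal{D}):R(Q)\cap\mathcal{S}=\{0\}\}$. For closed subspaces $\mathcal{M},\mathcal{N}$, $c[\mathcal{M},\mathcal{N}]=\sup\{|\langle\xi,\eta\rangle|:\xi\in\mathcal{M}\ominus(\mathcal{M}\cap\mathcal{N}),\ \eta\in\mathcal{N}\ominus(\mathcal{M}\cap\mathcal{N}),\ \|\xi\|=\|\eta\|=1\}$ (cosine of the Friedrichs angle). *)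

(* Defs.v *)
From HB Require Import structures.
From mathcomp Require Import all_boot all_order all_algebra.
From mathcomp Require Import boolp classical_sets reals.
From mathcomp Require Import complex.
Set Implicit Arguments. Unset Strict Implicit. Unset Printing Implicit Defensive.
Import Order.TTheory GRing.Theory Num.Theory.
Local Open Scope ring_scope.
Local Open Scope classical_set_scope.

Section Hilbert.
Variables (R : realType) (V : lmodType R[i]) (inner : V -> V -> R[i]).

Definition is_inner_product : Prop :=
  [/\ (forall (a : R[i]) (x y z : V), inner (a *: x + y) z = a * inner x z + inner y z),
      (forall x y : V, inner y x = Num.conj (inner x y)),
      (forall x : V, 0 <= inner x x) &
      (forall x : V, inner x x = 0 -> x = 0)].

Definition hnorm (x : V) : R := Num.sqrt (complex.Re (inner x x)).

Definition cabs (z : R[i]) : R := Normc.normc z.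

Definition converges_to (u : nat -> V) (x : V) : Prop :=
  forall eps : R, 0 < eps -> exists N : nat, forall n, (N <= n)%N -> hnorm (u n - x) < eps.

Definition cauchy_seq (u : nat -> V) : Prop :=
  forall eps : R, 0 < eps -> exists N : nat, forall n m, (N <= n)%N -> (N <= m)%N ->
    hnorm (u n - u m) < eps.

Definition is_complete : Prop :=
  forall u : nat -> V, cauchy_seq u -> exists x, converges_to u x.

Definition is_orthonormal_basis (e : nat -> V) : Prop :=
  (forall j k : nat, inner (e j) (e k) = (j == k)%:R) /\
  (forall x : V, (forall k, inner x (e k) = 0) -> x = 0).

Definition subspace (M : set V) : Prop :=
  M 0 /\ forall (a : R[i]) (x y : V), M x -> M y -> M (a *: x + y).

Definition closed_subspace (M : set V) : Prop :=
  subspace M /\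
  forall (u : nat -> V) (x : V), (forall n, M (u n)) -> converges_to u x -> M x.

Definition orthogonal_to (x : V) (M : set V) : Prop :=
  forall y, M y -> inner x y = 0.

Definition ominus_cap (M N : set V) : set V :=
  [set x | M x /\ orthogonal_to x (M `&` N)].

(** cosine of the Friedrichs angle c[M,N]  (sup of the empty set is 0) *)
Definition friedrichs_cos (M N : set V) : R :=
  sup [set r : R | exists xi eta : V,
         [/\ ominus_cap M N xi, hnorm xi = 1, ominus_cap N M eta, hnorm eta = 1
            & r = cabs (inner xi eta)]].

Definition bounded_linear (T : V -> V) : Prop :=
  (forall (a : R[i]) (x y : V), T (a *: x + y) = a *: T x + T y) /\
  exists C : R, forall x, hnorm (T x) <= C * hnorm x.

Definition diagonal (e : nat -> V) (T : V -> V) : Prop :=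
  bounded_linear T /\ forall k, exists lam : R[i], T (e k) = lam *: e k.

Definition orth_projection (T : V -> V) : Prop :=
  (forall x, T (T x) = T x) /\ (forall x y, inner (T x) y = inner x (T y)).

Definition finite_rank (T : V -> V) : Prop :=
  exists (n : nat) (f : 'I_n -> V), forall y, range T y ->
    exists c : 'I_n -> R[i], y = \sum_(i < n) c i *: f i.

Definition PD (e : nat -> V) : set (V -> V) :=
  [set T | diagonal e T /\ orth_projection T].
Definition P0D (e : nat -> V) : set (V -> V) :=
  [set T | PD e T /\ finite_rank T].
Definition P0SD (e : nat -> V) (S : set V) : set (V -> V) :=
  [set T | P0D e T /\ (forall y, range T y -> S y -> y = 0)].

Definition sup_cos (S : set V) (P : set (V -> V)) : R :=
  sup [set friedrichs_cos S (range T) | T in P].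

End Hilbert.

(* Main.v *)
Require Import Defs.
From HB Require Import structures.
From mathcomp Require Import all_boot all_order all_algebra.
From mathcomp Require Import boolp classical_sets reals.
From mathcomp Require Import complex.
From mathcomp Require Import ring lra.
Import Order.TTheory GRing.Theory Num.Theory.
Local Open Scope ring_scope.
Local Open Scope classical_set_scope.
Local Open Scope complex_scope.
Local Open Scope ring_scope.

Section H.
Variables (R : realType) (V : lmodType R[i]) (inner : V -> V -> R[i]).
Hypothesis Hin : is_inner_product inner.

Lemma ipDZl a x y z : inner (a *: x + y) z = a * inner x z + inner y z.
Proof. by case: Hin. Qed.
Lemma ipJ x y : inner y x = Num.conj (inner x y).
Proof. by case: Hin. Qed.
Lemma ip0l z : inner 0 z = 0.
Proof.
have := ipDZl 1 0 0 z; rewrite scaler0 addr0 mul1r => h.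
by apply: (addrI (inner 0 z)); rewrite addr0 -h.
Qed.
Lemma ipDl x y z : inner (x + y) z = inner x z + inner y z.
Proof. by have := ipDZl 1 x y z; rewrite scale1r mul1r. Qed.
Lemma ipZl a x z : inner (a *: x) z = a * inner x z.
Proof. by have := ipDZl a x 0 z; rewrite addr0 ip0l addr0. Qed.
Lemma ipNl x z : inner (- x) z = - inner x z.
Proof. by rewrite -scaleN1r ipZl mulN1r. Qed.
Lemma ipBl x y z : inner (x - y) z = inner x z - inner y z.
Proof. by rewrite ipDl ipNl. Qed.
Lemma ip0r z : inner z 0 = 0.
Proof. by rewrite ipJ ip0l conjC0. Qed.
Lemma ipDr x y z : inner z (x + y) = inner z x + inner z y.
Proof. by rewrite ipJ ipDl rmorphD /= -!ipJ. Qed.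
Lemma ipZr a x z : inner z (a *: x) = Num.conj a * inner z x.
Proof. by rewrite ipJ ipZl rmorphM /= -ipJ. Qed.
Lemma ipNr x z : inner z (- x) = - inner z x.
Proof. by rewrite ipJ ipNl rmorphN /= -ipJ. Qed.
Lemma ipBr x y z : inner z (x - y) = inner z x - inner z y.
Proof. by rewrite ipDr ipNr. Qed.
Lemma ip_suml n (P : pred 'I_n) (F : 'I_n -> V) z :
  inner (\sum_(i < n | P i) F i) z = \sum_(i < n | P i) inner (F i) z.
Proof. by apply: (big_morph (inner^~ z)) => [x y|]; [exact: ipDl|exact: ip0l]. Qed.
Lemma ip_sumr n (P : pred 'I_n) (F : 'I_n -> V) z :
  inner z (\sum_(i < n | P i) F i) = \sum_(i < n | P i) inner z (F i).
Proof. by apply: (big_morph (inner z)) => [x y|]; [exact: ipDr|exact: ip0r]. Qed.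

Definition N2 (x : V) : R := complex.Re (inner x x).

Lemma ip_self x : inner x x = (N2 x)%:C.
Proof.
case: Hin => _ _ H _; have := H x; rewrite /N2 lecE.
case: (inner x x) => a b /= /andP[/eqP b0 _].
by rewrite b0.
Qed.
Lemma N2_ge0 x : 0 <= N2 x.
Proof. by case: Hin => _ _ H _; have := H x; rewrite ip_self lecR. Qed.
Lemma N2_eq0 x : N2 x = 0 -> x = 0.
Proof. by case: Hin => _ _ _ H => h; apply: H; rewrite ip_self h. Qed.
Lemma N2_0 : N2 0 = 0.
Proof. by rewrite /N2 ip0l. Qed.

Lemma conjC_real (r : R) : Num.conj (r%:C) = r%:C.
Proof. by apply/eqP; rewrite eq_complex /= oppr0 !eqxx. Qed.

Lemma cabsE (z : R[i]) : `|z| = (cabs z)%:C.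
Proof. reflexivity. Qed.

Lemma cabs_sqr (z : R[i]) : ((cabs z) ^+ 2)%:C = z * Num.conj z.
Proof. by rewrite rmorphXn /= -normCK. Qed.

Lemma CS x y : cabs (inner x y) ^+ 2 <= N2 x * N2 y.
Proof.
have [y0|ny] := eqVneq (N2 y) 0.
  by rewrite (N2_eq0 _ y0) ip0r /cabs Normc.normc0 expr0n /= N2_0 mulr0.
have ny0 : 0 < N2 y by rewrite lt_def ny N2_ge0.
set a := inner x y.
set t := a / (N2 y)%:C.
have H := N2_ge0 (x - t *: y).
have E : inner (x - t *: y) (x - t *: y) =
   (N2 x)%:C - (a * Num.conj a) / (N2 y)%:C.
  rewrite !(ipBl, ipBr, ipZl, ipZr) -/a (ipJ x y) -/a !ip_self.
  rewrite /t rmorphM /= fmorphV /= conjC_real.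
  have : (N2 y)%:C != 0 by rewrite eq_complex /= negb_and ny.
  move=> nz; field; exact: nz.
move: H; rewrite /N2 E -/(N2 x) -cabs_sqr.
rewrite -rmorphV ?unitfE // -rmorphM -rmorphB /= subr_ge0.
by rewrite ler_pdivrMr.
Qed.

Lemma hnormE (x : V) : hnorm inner x = Num.sqrt (N2 x).
Proof. by []. Qed.
Lemma hnorm_ge0 (x : V) : 0 <= hnorm inner x.
Proof. exact: sqrtr_ge0. Qed.
Lemma hnorm_sqr (x : V) : hnorm inner x ^+ 2 = N2 x.
Proof. by rewrite hnormE sqr_sqrtr // N2_ge0. Qed.
Lemma cabs_ge0 (z : R[i]) : 0 <= cabs z.
Proof. by rewrite -lecR -cabsE normr_ge0. Qed.

Lemma CSn (x y : V) : cabs (inner x y) <= hnorm inner x * hnorm inner y.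
Proof.
rewrite -(@ler_pXn2r _ 2) // ?nnegrE ?mulr_ge0 ?hnorm_ge0 ?cabs_ge0 //.
by rewrite exprMn !hnorm_sqr CS.
Qed.

Lemma N2N x : N2 (- x) = N2 x.
Proof. by rewrite /N2 ipNl ipNr opprK. Qed.
Lemma N2B x y : N2 (x - y) = N2 (y - x).
Proof. by rewrite -N2N opprB. Qed.

Lemma N2_orth a b : inner a b = 0 -> N2 (a + b) = N2 a + N2 b.
Proof.
move=> h; apply: complexI; rewrite rmorphD /= -!ip_self.
by rewrite ipDl !ipDr h (ipJ a b) h conjC0 addr0 add0r.
Qed.

Lemma N2_scale (r : R) x : N2 (r%:C *: x) = r ^+ 2 * N2 x.
Proof.
apply: complexI; rewrite rmorphM rmorphXn /= -!ip_self ipZl ipZr conjC_real.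
by rewrite expr2 mulrA.
Qed.

Lemma cabs_realM (r : R) (z : R[i]) : 0 <= r -> cabs (r%:C * z) = r * cabs z.
Proof.
move=> r0; apply: complexI; rewrite rmorphM /= -!cabsE normrM.
by rewrite (@ger0_norm _ r%:C) // ler0c.
Qed.

Lemma cabs_eq0 (z : R[i]) : cabs z = 0 -> z = 0.
Proof. by move=> h; apply/eqP; rewrite -normr_eq0 cabsE h. Qed.

Lemma Re_le_cabs (z : R[i]) : complex.Re z <= cabs z.
Proof.
have := normc_ge_Re z; rewrite cabsE lecR => h.
exact: le_trans (ler_norm _) h.
Qed.

Lemma sum_delta (M : zmodType) n (P : pred nat) (F : nat -> M) (j : nat) :
  \sum_(i < n | P i) (if (i : nat) == j then F i else 0) =
  if (j < n)%N && P j then F j else 0.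
Proof.
rewrite big_mkcond; elim: n => [|n IH]; first by rewrite big_ord0.
rewrite big_ord_recr /= IH.
case: (ltngtP j n) => [jn|nj|<-].
- by rewrite ltnS (ltnW jn) if_same addr0.
- by rewrite ltnS leqNgt nj /= if_same addr0.
- by rewrite ltnS leqnn /= add0r; case: (P j).
Qed.


Variable e : nat -> V.
Hypothesis He : is_orthonormal_basis inner e.

Lemma ip_ee j k : inner (e j) (e k) = (j == k)%:R.
Proof. by case: He. Qed.
Lemma e_total x : (forall k, inner x (e k) = 0) -> x = 0.
Proof. by case: He => _; apply. Qed.

Definition Qf n (P : pred nat) (x : V) : V :=
  \sum_(i < n | P i) inner x (e i) *: e i.

Lemma Qf_coord n P x (j : nat) :
  inner (Qf n P x) (e j) = if (j < n)%N && P j then inner x (e j) else 0.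
Proof.
rewrite /Qf ip_suml -(sum_delta _ n P (fun i => inner x (e i))).
apply: eq_bigr => i _; rewrite ipZl ip_ee.
by case: eqP => [->|_]; rewrite ?mulr1 ?mulr0.
Qed.

Lemma Qf_lin n P a x y : Qf n P (a *: x + y) = a *: Qf n P x + Qf n P y.
Proof.
rewrite /Qf scaler_sumr -big_split /=; apply: eq_bigr => i _.
by rewrite ipDZl scalerDl scalerA.
Qed.
Lemma Qf0 n P : Qf n P 0 = 0.
Proof. by rewrite /Qf big1 // => i _; rewrite ip0l scale0r. Qed.
Lemma QfD n P x y : Qf n P (x + y) = Qf n P x + Qf n P y.
Proof. by have := Qf_lin n P 1 x y; rewrite !scale1r. Qed.
Lemma QfZ n P a x : Qf n P (a *: x) = a *: Qf n P x.
Proof. by have := Qf_lin n P a x 0; rewrite !addr0 Qf0 addr0. Qed.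
Lemma QfN n P x : Qf n P (- x) = - Qf n P x.
Proof. by rewrite -scaleN1r QfZ scaleN1r. Qed.
Lemma QfB n P x y : Qf n P (x - y) = Qf n P x - Qf n P y.
Proof. by rewrite QfD QfN. Qed.

Lemma Qf_ext n P P' x : (forall i, (i < n)%N -> P i = P' i) -> Qf n P x = Qf n P' x.
Proof. by move=> h; apply: eq_bigl => i; apply: h. Qed.

Lemma QfQf m n P P' x :
  Qf m P (Qf n P' x) = Qf m (fun i => P i && ((i < n)%N && P' i)) x.
Proof.
rewrite /Qf big_mkcondr /=; apply: eq_bigr => i _.
by rewrite -/(Qf n P' x) Qf_coord; case: ifP; rewrite ?scale0r.
Qed.

Lemma Qf_idem n P x : Qf n P (Qf n P x) = Qf n P x.
Proof. by rewrite QfQf; apply: Qf_ext => i lt; rewrite lt andbb. Qed.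

Lemma Qf_sa n P x y : inner (Qf n P x) y = inner x (Qf n P y).
Proof.
rewrite /Qf ip_suml ip_sumr; apply: eq_bigr => i _.
by rewrite ipZl ipZr (ipJ y (e i)) mulrC.
Qed.

Lemma Qf_orth n P x : inner (x - Qf n P x) (Qf n P x) = 0.
Proof. by rewrite ipBl Qf_sa Qf_idem subrr. Qed.

Lemma Qf_pyth n P x : N2 x = N2 (Qf n P x) + N2 (x - Qf n P x).
Proof.
rewrite -N2_orth; first by rewrite addrC subrK.
by rewrite ipJ Qf_orth conjC0.
Qed.

Lemma Qf_le n P x : N2 (Qf n P x) <= N2 x.
Proof. by rewrite (Qf_pyth n P x) lerDl N2_ge0. Qed.

Lemma Qf_e n P k : Qf n P (e k) = (if (k < n)%N && P k then 1 else 0) *: e k.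
Proof.
rewrite /Qf.
transitivity (\sum_(i < n | P i) (if (i : nat) == k then e i else 0)).
  apply: eq_bigr => i _; rewrite ipJ ip_ee rmorph_nat.
  by case: eqP => [->|ne]; rewrite ?scale1r ?scale0r.
by rewrite sum_delta; case: ifP; rewrite ?scale1r ?scale0r.
Qed.

Lemma Qf_range n P y : range (Qf n P) y <-> Qf n P y = y.
Proof.
split; first by case=> w _ <-; rewrite Qf_idem.
by move=> h; exists y.
Qed.

Lemma Qf_P0D n P : P0D inner e (Qf n P).
Proof.
split; last first.
  exists n, (fun i : 'I_n => e i) => y [w _ <-].
  exists (fun i : 'I_n => if P i then inner w (e i) else 0).
  by rewrite /Qf big_mkcond /=; apply: eq_bigr => i _; case: ifP; rewrite ?scale0r.
split; last by split; [exact: Qf_idem | exact: Qf_sa].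
split; last by move=> k; eexists; exact: Qf_e.
split; first exact: Qf_lin.
exists 1 => x; rewrite mul1r !hnormE; apply: ler_wsqrtr; exact: Qf_le.
Qed.


Lemma sup_le_gen (A : set R) c : (forall r, A r -> r <= c) -> 0 <= c -> sup A <= c.
Proof.
move=> h c0; case: (pselect (A !=set0)) => [ne|ne]; first exact: ge_sup.
rewrite (_ : A = set0) ?sup0 //; apply/seteqP; split => r Ar //.
by exfalso; apply: ne; exists r.
Qed.

Definition FS (M N : set V) := [set r : R | exists xi eta : V,
         [/\ ominus_cap inner M N xi, hnorm inner xi = 1, ominus_cap inner N M eta,
             hnorm inner eta = 1 & r = cabs (inner xi eta)]].

Lemma fcE M N : friedrichs_cos inner M N = sup (FS M N).
Proof. by []. Qed.

Lemma FS_le1 M N r : FS M N r -> r <= 1.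
Proof.
case=> xi [eta] [_ h1 _ h2 ->]; have := CSn xi eta; by rewrite h1 h2 mulr1.
Qed.

Lemma FS_ub M N : has_ubound (FS M N).
Proof. by exists 1 => r /FS_le1. Qed.

Lemma fc_le1 M N : friedrichs_cos inner M N <= 1.
Proof. by rewrite fcE; apply: sup_le_gen => // r /FS_le1. Qed.

Lemma fc_ge0 M N : 0 <= friedrichs_cos inner M N.
Proof.
rewrite fcE; case: (pselect (FS M N !=set0)) => [[r Hr]|ne].
  apply: le_trans (ub_le_sup (FS_ub M N) Hr).
  by case: Hr => xi [eta] [_ _ _ _ ->]; exact: cabs_ge0.
rewrite (_ : FS M N = set0) ?sup0 //; apply/seteqP; split => r Ar //.
by exfalso; apply: ne; exists r.
Qed.

Lemma fc_elem M N xi eta : ominus_cap inner M N xi -> hnorm inner xi = 1 ->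
  ominus_cap inner N M eta -> hnorm inner eta = 1 ->
  cabs (inner xi eta) <= friedrichs_cos inner M N.
Proof.
move=> h1 h2 h3 h4; rewrite fcE; apply: (ub_le_sup (FS_ub M N)).
by exists xi, eta; split.
Qed.

Definition IS (S : set V) (P : set (V -> V)) :=
  [set friedrichs_cos inner S (range T) | T in P].

Lemma IS_ub S P : has_ubound (IS S P).
Proof. by exists 1 => r [T _ <-]; exact: fc_le1. Qed.

Lemma sup_cos_ub S (P : set (V -> V)) T : P T ->
  friedrichs_cos inner S (range T) <= sup_cos inner S P.
Proof. by move=> PT; apply: (ub_le_sup (IS_ub S P)); exists T. Qed.

Lemma sup_cos_mono S (P1 P2 : set (V -> V)) : P1 `<=` P2 -> P1 !=set0 ->
  sup_cos inner S P1 <= sup_cos inner S P2.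
Proof.
move=> sub [T PT]; apply: sup_le.
- by move=> r [U PU <-]; apply: le_down; exists U => //; apply: sub.
- by exists (friedrichs_cos inner S (range T)), T.
- split; last exact: IS_ub.
  by exists (friedrichs_cos inner S (range T)), T => //; apply: sub.
Qed.

Lemma zero_P0SD S : P0SD inner e S (Qf 0 xpred0).
Proof.
split; first exact: Qf_P0D.
by move=> y [w _ <-] _; rewrite /Qf big_ord0.
Qed.


Lemma cabs_real (r : R) : 0 <= r -> cabs r%:C = r.
Proof.
move=> r0; apply: complexI; rewrite -cabsE ger0_norm // ler0c //.
Qed.

Variable S : set V.
Hypothesis HS : closed_subspace inner S.

Lemma S0 : S 0.
Proof. by case: HS => [[]]. Qed.
Lemma S_lin a x y : S x -> S y -> S (a *: x + y).
Proof. by case: HS => [[_ h] _]; apply: h. Qed.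
Lemma S_scale a x : S x -> S (a *: x).
Proof. by move=> Sx; rewrite -[a *: x]addr0; apply: S_lin => //; exact: S0. Qed.
Lemma S_add x y : S x -> S y -> S (x + y).
Proof. by move=> Sx Sy; rewrite -[x]scale1r; apply: S_lin. Qed.
Lemma S_sub x y : S x -> S y -> S (x - y).
Proof. by move=> Sx Sy; apply: S_add => //; rewrite -scaleN1r; apply: S_scale. Qed.

Definition c0 := sup_cos inner S (P0SD inner e S).

Lemma c0_ge0 : 0 <= c0.
Proof. exact: le_trans (fc_ge0 _ _) (sup_cos_ub _ _ _ (zero_P0SD S)). Qed.

Lemma hnorm_unit (x : V) : 0 < N2 x -> hnorm inner ((hnorm inner x)^-1%:C *: x) = 1.
Proof.
move=> x0; rewrite hnormE N2_scale exprVn hnorm_sqr mulVf ?sqrtr1 //.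
by rewrite gt_eqF.
Qed.

Lemma hyp_bound n P : (forall y, range (Qf n P) y -> S y -> y = 0) ->
  forall z, S z -> N2 (Qf n P z) <= c0 ^+ 2 * N2 z.
Proof.
move=> h z Sz.
have fcc : friedrichs_cos inner S (range (Qf n P)) <= c0.
  by apply: sup_cos_ub; split; [exact: Qf_P0D | exact: h].
set q := Qf n P z.
have [q0|nq] := eqVneq (N2 q) 0.
  by rewrite q0 mulr_ge0 ?exprn_ge0 ?c0_ge0 ?N2_ge0.
have qpos : 0 < N2 q by rewrite lt_def nq N2_ge0.
have zpos : 0 < N2 z by apply: lt_le_trans qpos (Qf_le _ _ _).
set a := hnorm inner z; set b := hnorm inner q.
have apos : 0 < a by rewrite /a hnormE sqrtr_gt0.
have bpos : 0 < b by rewrite /b hnormE sqrtr_gt0.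
have orth0 : forall x y, inner x 0 = inner x y -> inner x y = 0.
  by move=> x y <-; rewrite ip0r.
have := fc_elem S (range (Qf n P)) ((a^-1)%:C *: z) ((b^-1)%:C *: q).
have -> : inner ((a^-1)%:C *: z) ((b^-1)%:C *: q) = (a^-1 * b^-1 * N2 q)%:C.
  rewrite ipZl ipZr conjC_real.
  have -> : inner z q = (N2 q)%:C.
    by rewrite -ip_self; apply/eqP; rewrite -subr_eq0 -ipBl Qf_orth.
  by rewrite !rmorphM /= mulrA.
rewrite cabs_real; last by rewrite !mulr_ge0 ?invr_ge0 ?N2_ge0 // ltW.
have -> : N2 q = b ^+ 2 by rewrite hnorm_sqr.
have E : a^-1 * b^-1 * b ^+ 2 = b / a.
  by field; rewrite ?gt_eqF.
rewrite E => H.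
have H' : b / a <= c0.
  apply: le_trans fcc; apply: H.
  - split; first exact: S_scale.
    by move=> y [Sy Ry]; rewrite (h y Ry Sy) ip0r.
  - exact: hnorm_unit.
  - split; first by exists ((b^-1)%:C *: z) => //; rewrite QfZ.
    by move=> y [Ry Sy]; rewrite (h y Ry Sy) ip0r.
  - exact: hnorm_unit.
have H2 : b <= c0 * a by rewrite -ler_pdivrMr.
rewrite -!hnorm_sqr -/a -/b -exprMn.
rewrite ler_pXn2r ?nnegrE //; first exact: ltW.
by rewrite mulr_ge0 ?c0_ge0 // ltW.
Qed.


Lemma Qf_split n (P : pred nat) (i : 'I_n) (x : V) : P i ->
  Qf n P x = inner x (e i) *: e i + Qf n (fun j => P j && (j != i :> nat)) x.
Proof. by move=> Pi; rewrite /Qf (bigD1 i) //=. Qed.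

Lemma bound0 n (P : pred nat) (z : V) : (forall y, range (Qf n P) y -> S y -> y = 0) -> S z ->
  (1 - c0 ^+ 2) * N2 (z - 0) <= N2 (z - Qf n P z).
Proof.
move=> h Sz; have H1 := Qf_pyth n P z; have H2 := hyp_bound n P h z Sz.
rewrite subr0; lra.
Qed.

Lemma claim m : forall n (P : pred nat), (#|[pred i : 'I_n | P i]| <= m)%N ->
  forall z, S z -> exists x, [/\ S x, Qf n P x = x &
    (1 - c0 ^+ 2) * N2 (z - x) <= N2 (z - Qf n P z)].
Proof.
elim: m => [|m IH] n P hc z Sz;
  (case: (pselect (exists y, [/\ range (Qf n P) y, S y & y <> 0])) =>
    [[y [Ry Sy y0]]|nex]; last first).
- exists 0; split; [exact: S0 | exact: Qf0 | apply: bound0 => //].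
  move=> y Ry Sy; case: (eqVneq y 0) => // ny; exfalso; apply: nex.
  by exists y; split => //; exact/eqP.
- move: Ry; rewrite Qf_range => Qy.
  case: (pselect (exists i : 'I_n, P i /\ inner y (e i) <> 0)) => [[i [Pi _]]|nei].
    have : (0 < #|[pred j : 'I_n | P j]|)%N by apply/card_gt0P; exists i.
    by rewrite leqn0 in hc; rewrite (eqP hc).
  exfalso; apply: y0; rewrite -Qy /Qf big1 // => i Pi.
  have [->|ne] := eqVneq (inner y (e i)) 0; first by rewrite scale0r.
  by exfalso; apply: nei; exists i; split => //; exact/eqP.
- exists 0; split; [exact: S0 | exact: Qf0 | apply: bound0 => //].
  move=> y Ry Sy; case: (eqVneq y 0) => // ny; exfalso; apply: nex.
  by exists y; split => //; exact/eqP.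
move: Ry; rewrite Qf_range => Qy.
case: (pselect (exists i : 'I_n, P i /\ inner y (e i) <> 0)) => [[i [Pi yi]]|nei];
  last first.
  exfalso; apply: y0; rewrite -Qy /Qf big1 // => j Pj.
  have [->|ne] := eqVneq (inner y (e j)) 0; first by rewrite scale0r.
  by exfalso; apply: nei; exists j; split => //; exact/eqP.
set P' := fun j : nat => P j && (j != i :> nat).
have hc' : (#|[pred j : 'I_n | P' j]| <= m)%N.
  move: hc; rewrite (cardD1 i) inE Pi add1n ltnS; apply: leq_trans.
  by rewrite leq_eqVlt; apply/orP; left; apply/eqP; apply: eq_card => j;
    rewrite !inE /P' andbC.
set c := inner z (e i) / inner y (e i).
set z' := z - c *: y.
have Sz' : S z' by apply: S_sub => //; exact: S_scale.
have [x' [Sx' Qx' B']] := IH n P' hc' z' Sz'.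
exists (x' + c *: y); split.
- by apply: S_add => //; exact: S_scale.
- rewrite QfD QfZ Qy; congr (_ + _).
  transitivity (Qf n P' x'); last exact: Qx'.
  rewrite -{1}Qx' QfQf; apply: Qf_ext => j lt.
  by rewrite lt /P' /= andbA andbb.
- have -> : z - (x' + c *: y) = z' - x' by rewrite /z' opprD addrA addrAC.
  have <- : z' - Qf n P' z' = z - Qf n P z.
    have E1 : inner z' (e i) = 0.
      rewrite /z' ipBl ipZl /c mulrAC -mulrA divff ?mulr1 ?subrr //.
      exact/eqP.
    have := Qf_split n P i z' Pi; rewrite E1 scale0r add0r -/P' => <-.
    by rewrite /z' QfB QfZ Qy opprB addrA subrK.
  exact: B'.
Qed.


Hypothesis Hcomp : is_complete inner.

Lemma hnorm_lt (x : V) eps : 0 < eps -> N2 x < eps ^+ 2 -> hnorm inner x < eps.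
Proof.
move=> e0 h; rewrite hnormE -[X in _ < X](gtr0_norm e0) -sqrtr_sqr.
by rewrite ltr_sqrt ?exprn_gt0.
Qed.

Lemma hnormN (x : V) : hnorm inner (- x) = hnorm inner x.
Proof. by rewrite !hnormE N2N. Qed.

Lemma cabsN (z : R[i]) : cabs (- z) = cabs z.
Proof. by apply: complexI; rewrite -!cabsE normrN. Qed.

Lemma hnorm_e k : hnorm inner (e k) = 1.
Proof. by rewrite hnormE /N2 ip_ee eqxx /= sqrtr1. Qed.

Lemma parseval_bound (P : pred nat) (y : V) B :
  (forall n, N2 (Qf n P y) <= B) -> (forall k, ~~ P k -> inner y (e k) = 0) ->
  N2 y <= B.
Proof.
move=> hB hP.
pose a n := N2 (Qf n P y).
have QQ : forall m n, (m <= n)%N -> Qf m P (Qf n P y) = Qf m P y.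
  move=> m n mn; rewrite QfQf; apply: Qf_ext => i im.
  by rewrite (leq_trans im mn) /= andbb.
have diff : forall m n, (m <= n)%N -> N2 (Qf n P y - Qf m P y) = a n - a m.
  move=> m n mn; rewrite /a (Qf_pyth m P (Qf n P y)) QQ //.
  by rewrite [N2 (Qf m P y) + _]addrC addrK.
have mono : forall m n, (m <= n)%N -> a m <= a n.
  by move=> m n mn; rewrite -subr_ge0 -diff // N2_ge0.
pose A := [set a n | n in [set: nat]].
have hsA : has_sup A.
  split; first by exists (a 0%N), 0%N.
  by exists B => r [n _ <-]; exact: hB.
have cau : cauchy_seq inner (fun n => Qf n P y).
  move=> eps e0.
  have [r [N _ <-] hN] := sup_adherent (exprn_gt0 2 e0) hsA.
  exists N => n m Nn Nm.
  have key : forall n m, (N <= m)%N -> (m <= n)%N ->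
      hnorm inner (Qf n P y - Qf m P y) < eps.
    move=> n' m' Nm' mn'; apply: hnorm_lt => //; rewrite diff //.
    have : a n' <= sup A by apply: ub_le_sup; [case: hsA | exists n'].
    have := mono _ _ Nm'; lra.
  case: (leqP m n) => mn; first exact: key.
  rewrite -hnormN opprB; apply: key => //; exact: ltnW.
have [z cz] := Hcomp _ cau.
have coord : forall k, inner z (e k) = inner y (e k).
  move=> k; apply/eqP; rewrite -subr_eq0; apply/eqP; apply: cabs_eq0.
  apply/eqP; rewrite eq_le cabs_ge0 andbT; apply/ler_addgt0Pr => eps e0.
  rewrite add0r; have [N hN] := cz eps e0.
  have hn := hN (maxn N k.+1) (leq_maxl _ _).
  have E : inner (Qf (maxn N k.+1) P y) (e k) = inner y (e k).
    rewrite Qf_coord (leq_trans (leqnn k.+1) (leq_maxr _ _)) /=.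
    by case: ifP => // /negbT /hP ->.
  rewrite -E -ipBl -cabsN -ipNl opprB.
  apply: le_trans (CSn _ _) _; rewrite hnorm_e mulr1; exact: ltW.
have yz : y = z.
  apply/eqP; rewrite -subr_eq0; apply/eqP; apply: e_total => k.
  by rewrite ipBl coord subrr.
apply/ler_addgt0Pr => eps e0.
set h := hnorm inner y.
have h0 : 0 <= h := hnorm_ge0 y.
have d0 : 0 < eps / (h + 1) by rewrite divr_gt0 // ltr_wpDl.
have [N hN] := cz _ d0.
have hn := hN N (leqnn N); rewrite -yz in hn.
set q := Qf N P y in hn *.
have E : N2 y = a N + complex.Re (inner (y - q) y).
  have Eq : inner q y = (N2 q)%:C.
    rewrite (ipJ y q).
    have -> : inner y q = (N2 q)%:C.
      by rewrite -ip_self; apply/eqP; rewrite -subr_eq0 -ipBl Qf_orth.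
    exact: conjC_real.
  have H : (N2 y)%:C = (N2 q)%:C + inner (y - q) y.
    by rewrite -ip_self -Eq ipBl addrC subrK.
  transitivity (complex.Re ((N2 y)%:C)); first by [].
  rewrite H /a -/q.
  by case: (inner (y - q) y).
rewrite E.
have c1 : complex.Re (inner (y - q) y) <= hnorm inner (y - q) * h.
  exact: le_trans (Re_le_cabs _) (CSn _ _).
have c2 : hnorm inner (y - q) < eps / (h + 1) by rewrite -hnormN opprB.
have c3 : hnorm inner (y - q) * h <= eps / (h + 1) * h.
  by rewrite ler_wpM2r // ltW.
have c4 : eps / (h + 1) * h <= eps.
  rewrite mulrAC ler_pdivrMr ?ltr_wpDl //.
  by apply: ler_wpM2l; [exact: ltW | lra].
have := hB N; rewrite -/(a N) => c5.
lra.
Qed.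


Lemma main_bound (Q : V -> V) : PD inner e Q -> c0 < 1 ->
  friedrichs_cos inner S (range Q) <= c0.
Proof.
case=> [[[Qlin _] Qdiag] [Qidem Qsa]] c1.
have Q0 : Q 0 = 0.
  have := Qlin 1 0 0; rewrite scaler0 addr0 scale1r => h.
  by apply: (addrI (Q 0)); rewrite addr0 -h.
have QD : forall x y, Q (x + y) = Q x + Q y.
  by move=> x y; have := Qlin 1 x y; rewrite !scale1r.
have QZ : forall a x, Q (a *: x) = a *: Q x.
  by move=> a x; have := Qlin a x 0; rewrite !addr0 Q0 addr0.
have QE : forall k, Q (e k) = e k \/ Q (e k) = 0.
  move=> k; have [lam hl] := Qdiag k.
  have := Qidem (e k); rewrite hl QZ hl => /(congr1 (inner^~ (e k))).
  rewrite !ipZl ip_ee eqxx mulr1 => /eqP.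
  move=> h; have : lam * (lam - 1) == 0 by rewrite mulrBr mulr1 subr_eq0.
  rewrite mulf_eq0 subr_eq0 => /orP[] /eqP ->; rewrite ?scale0r ?scale1r; by [right|left].
pose pJ := fun k => Q (e k) == e k.
have c0sq : 0 <= 1 - c0 ^+ 2.
  rewrite subr_ge0 -(expr1n _ 2) ler_pXn2r ?nnegrE ?c0_ge0 //; exact: ltW.
rewrite fcE; apply: sup_le_gen; last exact: c0_ge0.
move=> r [xi [eta [[Sxi oxi] h1 [Reta _] h2 ->]]].
set y := Q xi.
have ycoord : forall k, inner y (e k) = if pJ k then inner xi (e k) else 0.
  move=> k; rewrite /y Qsa /pJ.
  by case: (QE k) => ->; [rewrite eqxx | rewrite ip0r; case: ifP => // /eqP <-; rewrite ip0r].
have Qfy : forall n, Qf n pJ y = Qf n pJ xi.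
  by move=> n; apply: eq_bigr => i Pi; rewrite ycoord Pi.
have N2xi : N2 xi = 1 by rewrite -hnorm_sqr h1 expr1n.
have bn : forall n, N2 (Qf n pJ y) <= c0 ^+ 2.
  move=> n; rewrite Qfy.
  have [x [Sx Qx B]] := claim _ n pJ (leqnn _) xi Sxi.
  have Rx : range Q x.
    exists x => //; rewrite -Qx /Qf.
    rewrite (big_morph Q QD Q0); apply: eq_bigr => i Pi.
    by rewrite QZ (eqP Pi).
  have ox : inner xi x = 0 by apply: oxi; split.
  have N2d : 1 <= N2 (xi - x).
    rewrite N2_orth ?ipNr ?ox ?oppr0 // N2N N2xi lerDl; exact: N2_ge0.
  have := Qf_pyth n pJ xi; rewrite N2xi => P1.
  have : (1 - c0 ^+ 2) * 1 <= (1 - c0 ^+ 2) * N2 (xi - x) by rewrite ler_wpM2l.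
  lra.
have Ny : N2 y <= c0 ^+ 2.
  apply: (parseval_bound _ _ _ bn) => k nk; rewrite ycoord.
  by rewrite (negbTE nk).
have Qeta : Q eta = eta by case: Reta => w _ <-; rewrite Qidem.
rewrite -Qeta -Qsa -/y.
apply: le_trans (CSn _ _) _; rewrite h2 mulr1 hnormE.
rewrite -(ger0_norm c0_ge0) -sqrtr_sqr; exact: ler_wsqrtr.
Qed.

Lemma prop_main :
  (sup_cos inner S (PD inner e) < 1 <-> sup_cos inner S (P0D inner e) < 1) /\
  (sup_cos inner S (P0D inner e) < 1 <-> sup_cos inner S (P0SD inner e S) < 1).
Proof.
have z0 := zero_P0SD S.
have m1 : sup_cos inner S (P0D inner e) <= sup_cos inner S (PD inner e).
  by apply: sup_cos_mono; [move=> T [] | exists (Qf 0 xpred0); case: z0].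
have m2 : sup_cos inner S (P0SD inner e S) <= sup_cos inner S (P0D inner e).
  by apply: sup_cos_mono; [move=> T [] | exists (Qf 0 xpred0)].
have key : c0 < 1 -> sup_cos inner S (PD inner e) <= c0.
  move=> c1; apply: sup_le_gen; last exact: c0_ge0.
  move=> r [T PT <-]; exact: main_bound.
rewrite -/c0 in m2 *.
split; split => h.
- exact: le_lt_trans m1 h.
- exact: le_lt_trans (key (le_lt_trans m2 h)) (le_lt_trans m2 h).
- exact: le_lt_trans m2 h.
- exact: le_lt_trans m1 (le_lt_trans (key h) h).
Qed.

End H.

Theorem proposition4p15 (R : realType) (V : lmodType R[i]) (inner : V -> V -> R[i])
  (Hinner : is_inner_product inner) (Hcomplete : is_complete inner)
  (e : nat -> V) (He : is_orthonormal_basis inner e)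
  (S : set V) (HS : closed_subspace inner S) :
  (sup_cos inner S (PD inner e) < 1 <-> sup_cos inner S (P0D inner e) < 1) /\
  (sup_cos inner S (P0D inner e) < 1 <-> sup_cos inner S (P0SD inner e S) < 1).
Proof. exact: (@prop_main R V inner Hinner e He S HS Hcomplete). Qed.
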